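(* Let $b\ge 2$ and let $N$ be a $b$-wARH number with $k$ base-$b$ digits and with additive extra term $A$. Then $k\le A+4$.
   Context: Fix a base $b\ge 2$. $s_b(N)$ is the sum of the base-$b$ digits of $N$. For a positive integer $X$, its reversal $X^R$ is the integer whose base-$b$ representation is that of $X$ written in reverse order (leading zeros of the result are dropped). A positive integer $N$ is a $b$-wARH number if there exists an integer $A\ge 0$, called an additive extra term of $N$, such that $N=(A+s_b(N))+(A+s_b(N))^R$. *)

(* Defs.v *)
From mathcomp Require Import all_boot.
Set Implicit Arguments. Unset Strict Implicit. Unset Printing Implicit Defensive.

(* Base-b digits of n, least significant first; digits b 0 = [::].
   The fuel n suffices since n %/ b < n for n > 0, b >= 2. *)
Fixpoint digits_aux (fuel b n : nat) : seq nat :=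
  match fuel with
  | 0 => [::]
  | fuel'.+1 => if n == 0 then [::] else (n %% b) :: digits_aux fuel' b (n %/ b)
  end.

Definition digits (b n : nat) : seq nat := digits_aux n b n.

Definition from_digits (b : nat) (s : seq nat) : nat :=
  foldr (fun d acc => d + b * acc) 0 s.

Definition digsum (b n : nat) : nat := sumn (digits b n).

(* X^R: digits written in reverse order; leading zeros of the result are
   automatically dropped by evaluating the reversed digit string. *)
Definition rev_num (b n : nat) : nat := from_digits b (rev (digits b n)).

Definition is_extra_term (b N A : nat) : Prop :=
  N = (A + digsum b N) + rev_num b (A + digsum b N).

Definition wARH (b N : nat) : Prop := 0 < N /\ exists A, is_extra_term b N A.

(* Main.v *)
Require Import Defs.
From mathcomp Require Import all_boot.
From mathcomp Require Import zify.

Lemma digits_aux_lt f b n : 2 <= b -> all (fun d => d < b) (digits_aux f b n).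
Proof.
move=> hb; elim: f n => [|f IH] n //=.
case: (n == 0) => //=; rewrite IH andbT ltn_mod; lia.
Qed.


Lemma digits_aux_up f b n : 2 <= b -> n <= f ->
  n < b ^ size (digits_aux f b n).
Proof.
move=> hb; elim: f n => [|f IH] n /=; first by rewrite leqn0 => /eqP ->.
move=> hn; case: posnP => [->//|n0] /=.
have hlt := ltn_Pdiv hb (n0 : 0 < n).
have := IH (n %/ b) ltac:(lia).
set s := size _ => H.
have hm : n %% b < b by rewrite ltn_mod; lia.
rewrite expnS {1}(divn_eq n b).
have := leq_mul (leqnn b) H; nia.
Qed.

Lemma digits_aux_low f b n : 2 <= b -> n <= f -> 0 < n ->
  b ^ (size (digits_aux f b n)).-1 <= n.
Proof.
move=> hb; elim: f n => [|f IH] n /=; first by lia.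
move=> hn n0; rewrite (negbTE (lt0n_neq0 n0)) /=.
have hlt := ltn_Pdiv hb n0.
case: (posnP (n %/ b)) => [q0|qp].
  have -> : digits_aux f b (n %/ b) = [::] by case: f {IH hn hlt} => //= f; rewrite q0.
  by rewrite expn0.
have := IH (n %/ b) ltac:(lia) qp.
case E: (digits_aux f b (n %/ b)) => [|x s] /=.
  by rewrite expn0; lia.
move=> H; rewrite expnS.
have := leq_mul (leqnn b) H.
have := leq_trunc_div n b. rewrite mulnC. lia.
Qed.

Lemma from_digits_lt b s : all (fun d => d < b) s -> from_digits b s < b ^ size s.
Proof.
elim: s => [|d s IH] //= /andP [hd hs].
have H := IH hs; rewrite expnS.
have := leq_mul (leqnn b) H. nia.
Qed.

Lemma sumn_le b s : all (fun d => d < b) s -> sumn s <= (b - 1) * size s.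
Proof.
elim: s => [|d s IH] //= /andP [hd hs].
have := IH hs; rewrite mulnS; lia.
Qed.

Lemma key b k A : 2 <= b -> A + 5 <= k -> A + (b - 1) * k < b ^ (k - 2).
Proof.
move=> hb hk.
suff: forall j, b * (j + 5) < b ^ (j + 3) + 5.
  have -> : k = (k - 5) + 5 by lia.
  move=> /(_ (k - 5)); have -> : k - 5 + 5 - 2 = k - 5 + 3 by lia. nia.
elim=> [|j IH].
  rewrite /= !expnS expn0 muln1. nia.
have -> : j.+1 + 3 = (j + 3).+1 by lia.
rewrite expnS.
have h1 : b ^ (j + 3) >= b.
  rewrite -{1}(expn1 b) leq_exp2l; lia.
have : b * b ^ (j + 3) >= 2 * b ^ (j + 3) by apply: leq_mul.
lia.
Qed.

Theorem mainTheorem17 (b N A : nat) :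
  2 <= b -> 0 < N -> is_extra_term b N A ->
  size (digits b N) <= A + 4.
Proof.
move=> hb hN hE.
rewrite /is_extra_term in hE.
set X := A + digsum b N in hE.
set k := size (digits b N).
set m := size (digits b X).
have hX : 0 < X.
  case: (posnP X) => // X0; move: hE; rewrite X0 /rev_num /digits /=; lia.
have hlowN := @digits_aux_low N b N hb (leqnn N) hN.
have hupX : rev_num b X < b ^ m.
  rewrite /rev_num /m -(size_rev (digits b X)); apply: from_digits_lt.
  by rewrite all_rev; apply: digits_aux_lt.
have hupX' := @digits_aux_up X b X hb (leqnn X).
have hlowX := @digits_aux_low X b X hb (leqnn X) hX.
rewrite -/(digits b X) -/m in hupX' hlowX.
rewrite -/(digits b N) -/k in hlowN.
have hs : digsum b N <= (b - 1) * k by apply: sumn_le; apply: digits_aux_lt.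
have hkm : k <= m.+1.
  have h1 : N < b ^ m.+1.
    rewrite expnS; have: 2 * b ^ m <= b * b ^ m by apply: leq_mul.
    lia.
  have : b ^ k.-1 < b ^ m.+1 by lia.
  rewrite ltn_exp2l; lia.
rewrite leqNgt; apply/negP => hk.
have := @key b k A hb ltac:(lia).
have : b ^ (k - 2) <= b ^ m.-1 by rewrite leq_exp2l; lia.
rewrite /X in hlowX. lia.
Qed.
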